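(* Every triangulated two-dimensional sphere with at most $12$ triangles has a winning strategy for the coloring game.
   Context: Coloring game on a simplicial $2$-sphere $B$: (1) choose one or two vertices of $B$ and color them red; (2) choose an edge of $B$ both of whose endpoints are currently uncolored and which, together with some already red vertex, spans a triangle of $B$; color the edge and its two endpoints red and color that triangle green. Step (2) may be repeated as long as possible. $B$ has a winning strategy if some admissible sequence of moves produces at least $f(B)/4$ green triangles, where $f(B)$ is the number of triangles of $B$. *)

(* Defs.v *)
From mathcomp Require Import all_boot.
Set Implicit Arguments. Unset Strict Implicit. Unset Printing Implicit Defensive.

Section Complex.
Variable T : finType.
Variable F : {set {set T}}.   (* the triangles (facets) of B *)

Definition verts : {set T} := \bigcup_(t in F) t.

Definition edges : {set {set T}} :=
  [set e : {set T} | (#|e| == 2) && [exists t in F, e \subset t]].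

Definition adj : rel T := fun x y => (x != y) && ([set x; y] \in edges).

(* the link of a vertex v, as a graph on the neighbours of v *)
Definition link_rel (v : T) : rel T :=
  fun x y => [set v; x; y] \in F.
Definition link_verts (v : T) : {set T} :=
  [set x | (x != v) && ([set v; x] \in edges)].

(* Combinatorial triangulated 2-sphere: a pure 2-dimensional simplicial
   complex which is a closed connected combinatorial 2-manifold
   (every edge in exactly two triangles, every vertex link a single cycle)
   with Euler characteristic 2. *)
Definition is_sphere2 : Prop :=
  [/\ forall t, t \in F -> #|t| = 3,
      forall e, e \in edges -> #|[set t in F | e \subset t]| = 2,
      forall v, v \in verts ->
        forall x y, x \in link_verts v -> y \in link_verts v ->
          connect (link_rel v) x y,
      forall x y, x \in verts -> y \in verts -> connect adj x y
    & (#|verts| + #|F| = #|edges| + 2)%N].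

(* A move (a, b, c) colours the edge {a,b} and its
   endpoints red and the triangle {a,b,c} green; it is admissible when
   a, b are currently uncoloured, {a,b,c} is a triangle of B and c is red. *)
Fixpoint valid_moves (R : {set T}) (ms : seq (T * T * T)) : bool :=
  match ms with
  | [::] => true
  | (a, b, c) :: ms' =>
      [&& a \notin R, b \notin R, a != b, [set a; b; c] \in F, c \in R
        & valid_moves (a |: (b |: R)) ms']
  end.

Definition green_triangles (ms : seq (T * T * T)) : {set {set T}} :=
  [set [set m.1.1; m.1.2; m.2] | m in ms].

Definition has_winning_strategy : Prop :=
  exists (R0 : {set T}) (ms : seq (T * T * T)),
    [/\ R0 \subset verts, 1 <= #|R0| <= 2, valid_moves R0 ms
      & #|F| <= 4 * #|green_triangles ms|].

End Complex.

(* Main.v *)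
Require Import Defs.
From mathcomp Require Import all_boot zify.
Set Implicit Arguments. Unset Strict Implicit. Unset Printing Implicit Defensive.

Section Aux.
Variable T : finType.

Lemma set3_seq (a b c : T) : #|[set a; b; c]| = #|[:: a; b; c]|.
Proof. by apply: eq_card => z; rewrite !inE orbA. Qed.

Lemma card3 (a b c : T) : a != b -> b != c -> a != c -> #|[set a; b; c]| = 3.
Proof.
move=> ab bc ac; rewrite set3_seq; apply/card_uniqP.
by rewrite /= !inE negb_or ab ac bc.
Qed.

Lemma card3_neq (a b c : T) : #|[set a; b; c]| = 3 -> [/\ a != b, b != c & a != c].
Proof.
rewrite set3_seq => /card_uniqP /=; rewrite !inE negb_or andbT.
by case/andP=> /andP [-> ->] ->.
Qed.

Lemma set3_12 (a b c : T) : [set a; b; c] = [set b; a; c].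
Proof. by apply/setP => z; rewrite !inE; case: (z == a); case: (z == b); case: (z == c). Qed.
Lemma set3_23 (a b c : T) : [set a; b; c] = [set a; c; b].
Proof. by apply/setP => z; rewrite !inE; case: (z == a); case: (z == b); case: (z == c). Qed.
End Aux.

Section Sphere.
Variable T : finType.
Variable F : {set {set T}}.
Hypothesis Htri : forall t, t \in F -> #|t| = 3.
Hypothesis Hedge : forall e, e \in edges F -> #|[set t in F | e \subset t]| = 2.

Lemma tri_neq a b c : [set a; b; c] \in F -> [/\ a != b, b != c & a != c].
Proof. by move/Htri/card3_neq. Qed.

Lemma sub2_3 (a b c : T) : [set a; b] \subset [set a; b; c].
Proof. by apply/subsetP => z; rewrite !inE => /orP[]->; rewrite ?orbT. Qed.

Lemma tri_edge a b c : [set a; b; c] \in F -> [set a; b] \in edges F.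
Proof.
move=> H; have [ab _ _] := tri_neq H.
rewrite inE cards2 ab /=; apply/existsP; exists [set a; b; c].
by rewrite H sub2_3.
Qed.

Lemma tri_link c x y : [set c; x; y] \in F -> x \in link_verts F c.
Proof.
move=> H; have [cx _ _] := tri_neq H.
by rewrite inE eq_sym cx (tri_edge H).
Qed.

Lemma edge_form t p q : t \in F -> p \in t -> q \in t -> p != q ->
  exists y, t = [set p; q; y].
Proof.
move=> tF pt qt pq.
have : ~~ (t \subset [set p; q]).
  apply/negP => /subset_leq_card; rewrite cards2 Htri //; by case: (p != q).
case/subsetPn => y yt; rewrite !inE negb_or => /andP [yp yq].
exists y; apply/eqP; rewrite eq_sym eqEcard Htri // card3 //; last by rewrite eq_sym.
rewrite ?leqnn andbT; apply/subsetP => z; rewrite !inE.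
by case/orP => [/orP[]|] /eqP ->.
by rewrite eq_sym.
Qed.

Lemma tri_inj p q a b : [set p; q; a] \in F -> [set p; q; a] = [set p; q; b] -> a = b.
Proof.
move=> H E; have [_ qa pa] := tri_neq H.
have : a \in [set p; q; b] by rewrite -E !inE eqxx orbT.
rewrite !inE => /orP [/orP [] |] /eqP E'; by rewrite ?E' ?eqxx in pa qa.
Qed.

Lemma TS_tri p q a : [set p; q; a] \in F -> [set p; q; a] \in [set t in F | [set p; q] \subset t].
Proof. by move=> H; rewrite inE H sub2_3. Qed.

Lemma edge_other p q a : [set p; q; a] \in F -> exists2 b, b != a & [set p; q; b] \in F.
Proof.
move=> H; have [pq _ _] := tri_neq H.
have := Hedge (tri_edge H) => C.
have : 1 < #|[set t in F | [set p; q] \subset t]| by rewrite C.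
case/card_gt1P => t1 [t2 [h1 h2 t12]].
have [t [tS tne]] : exists t, t \in [set t in F | [set p; q] \subset t] /\ t != [set p; q; a].
  case: (eqVneq t1 [set p; q; a]) => [e1|n1]; last by exists t1.
  by exists t2; split => //; rewrite -e1 eq_sym.
move: tS; rewrite inE => /andP [tF /subsetP sub].
have [b tb] := edge_form tF (sub _ (setU11 _ _)) (sub _ (setU1r _ (set11 _))) pq.
exists b; last by rewrite -tb.
by apply: contra tne => /eqP ab; rewrite tb ab.
Qed.

Lemma edge_apex p q : [set p; q] \in edges F -> p != q -> exists y, [set p; q; y] \in F.
Proof.
move=> E pq; have := Hedge E => C.
have : 0 < #|[set t in F | [set p; q] \subset t]| by rewrite C.
case/card_gt0P => t; rewrite inE => /andP [tF /subsetP sub].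
have [y ty] := edge_form tF (sub _ (setU11 _ _)) (sub _ (setU1r _ (set11 _))) pq.
by exists y; rewrite -ty.
Qed.

Lemma edge_two p q a b z : [set p; q; a] \in F -> [set p; q; b] \in F -> a != b ->
  [set p; q; z] \in F -> (z == a) || (z == b).
Proof.
move=> Ha Hb ab Hz; apply/negPn/negP; rewrite negb_or => /andP [za zb].
have C := Hedge (tri_edge Ha).
have ne : forall u v, [set p; q; u] \in F -> u != v -> [set p; q; u] != [set p; q; v].
  by move=> u v Hu; apply: contra => /eqP /(tri_inj Hu) ->.
have : #|[set [set p; q; a]; [set p; q; b]; [set p; q; z]]| <= 2.
  rewrite -C; apply: subset_leq_card; apply/subsetP => t /setUP [/setUP[]|] /set1P ->; exact: TS_tri.
rewrite card3 //; [exact: ne | apply: ne Hb _; by rewrite eq_sym | apply: ne Ha _; by rewrite eq_sym].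
Qed.

Lemma cross (e : rel T) (P : pred T) x y : connect e x y -> P x -> ~~ P y ->
  exists a b, [/\ e a b, P a & ~~ P b].
Proof.
case/connectP => s; elim: s x => [|z s IH] x /=; first by move=> _ -> ->.
case/andP => exz pz ey Px nPy.
case: (boolP (P z)) => Pz; first exact: (IH z pz ey Pz nPy).
by exists x, z.
Qed.

Hypothesis Hlink : forall v, v \in verts F ->
        forall x y, x \in link_verts F v -> y \in link_verts F v ->
          connect (link_rel F v) x y.

Lemma link_closed c (s : seq T) x0 : c \in verts F -> x0 \in s -> x0 \in link_verts F c ->
  (forall x z, x \in s -> [set c; x; z] \in F -> z \in s) -> #|link_verts F c| <= size s.
Proof.
move=> Hc xs Hx0 Hcl; apply: leq_trans (card_size s).
apply: subset_leq_card; apply/subsetP => y Hy; apply/negPn/negP => ny.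
have [a [b [ab sa sb]]] := cross (P := fun z => z \in s) (Hlink Hc Hx0 Hy) xs ny.
by move: sb; rewrite (Hcl a b sa ab).
Qed.

Ltac neqs := repeat (match goal with |- is_true (_ && _) => apply/andP; split end);
  try done; try (rewrite eq_sym; done).

Lemma tri_sym c x y : [set c; x; y] \in F -> [set c; y; x] \in F.
Proof. by rewrite set3_23. Qed.

Lemma in_nb (s : seq T) c x a b z : a \in s -> b \in s ->
  [set c; x; a] \in F -> [set c; x; b] \in F -> a != b -> [set c; x; z] \in F -> z \in s.
Proof. by move=> ha hb Ha Hb ab Hz; case/orP: (edge_two Ha Hb ab Hz) => /eqP ->. Qed.

Lemma walk4 c x0 : c \in verts F -> 4 <= #|link_verts F c| -> x0 \in link_verts F c ->
  exists x1 x2 x3, [/\ [set c; x0; x1] \in F, [set c; x1; x2] \in F, [set c; x2; x3] \in F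
     & uniq [:: c; x0; x1; x2; x3]].
Proof.
move=> Hc d4 Hx0.
have [x1 t01] : exists x1, [set c; x0; x1] \in F.
  move: Hx0; rewrite inE => /andP [x0c E]; apply: edge_apex E _; by rewrite eq_sym.
have [x2 x20 t12] := edge_other (tri_sym t01).
have [x3 x31 t23] := edge_other (tri_sym t12).
have [c0 o1 c1] := tri_neq t01; have [_ o12 c2] := tri_neq t12; have [_ o23 c3] := tri_neq t23.
have x30 : x3 != x0.
  apply/negP => /eqP e; move: t23; rewrite e => t20.
  suff H3 : #|link_verts F c| <= 3 by move: (leq_trans d4 H3).
  apply: (link_closed (s := [:: x0; x1; x2]) Hc (mem_head _ _) Hx0) => x z.
  rewrite in_cons => /predU1P [->|]; last rewrite in_cons => /predU1P [->|]; last rewrite mem_seq1 => /eqP ->; move=> Hz.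
  - apply: (in_nb _ _ t01 (tri_sym t20) o12 Hz); by rewrite !inE eqxx ?orbT.
  - apply: (in_nb _ _ (tri_sym t01) t12 _ Hz); by rewrite ?inE ?eqxx ?orbT // eq_sym.
  - apply: (in_nb _ _ (tri_sym t12) t20 _ Hz); by rewrite ?inE ?eqxx ?orbT // eq_sym.
exists x1, x2, x3; split => //; rewrite /= !inE !negb_or; neqs.
Qed.

Lemma nb_not c x a b z : [set c; x; a] \in F -> [set c; x; b] \in F -> a != b ->
  z != a -> z != b -> [set c; x; z] \in F -> False.
Proof. by move=> Ha Hb ab za zb Hz; move: (edge_two Ha Hb ab Hz); rewrite (negbTE za) (negbTE zb). Qed.

Lemma walk5 c x0 : c \in verts F -> 5 <= #|link_verts F c| -> x0 \in link_verts F c ->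
  exists x1 x2 x3 x4, [/\ [set c; x0; x1] \in F, [set c; x1; x2] \in F, [set c; x2; x3] \in F,
     [set c; x3; x4] \in F & uniq [:: c; x0; x1; x2; x3; x4]].
Proof.
move=> Hc d5 Hx0.
have [x1 [x2 [x3 [t01 t12 t23 U]]]] := walk4 Hc (ltnW d5) Hx0.
move: U; rewrite /= !inE !negb_or => /and5P [/and4P [c0 c1 c2 c3] /and3P [o1 o2 o3]
   /andP [o12 o13] o23 _].
have [x4 x42 t34] := edge_other (tri_sym t23).
have [_ o34 c4] := tri_neq t34.
have x41 : x4 != x1.
  apply/negP => /eqP e; rewrite e in t34.
  apply: (nb_not (tri_sym t01) t12 o2 _ _ (tri_sym t34)); by rewrite eq_sym.
have x40 : x4 != x0.
  apply/negP => /eqP e; rewrite e in t34.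
  suff H4 : #|link_verts F c| <= 4 by move: (leq_trans d5 H4).
  apply: (link_closed (s := [:: x0; x1; x2; x3]) Hc (mem_head _ _) Hx0) => x z.
  rewrite in_cons => /predU1P [->|]; last rewrite in_cons => /predU1P [->|];
    last rewrite in_cons => /predU1P [->|]; last rewrite mem_seq1 => /eqP ->; move=> Hz.
  - apply: (in_nb _ _ t01 (tri_sym t34) o13 Hz); by rewrite !inE eqxx ?orbT.
  - apply: (in_nb _ _ (tri_sym t01) t12 o2 Hz); by rewrite !inE eqxx ?orbT.
  - apply: (in_nb _ _ (tri_sym t12) t23 o13 Hz); by rewrite !inE eqxx ?orbT.
  - apply: (in_nb _ _ (tri_sym t23) t34 _ Hz); by rewrite ?inE ?eqxx ?orbT // eq_sym.
exists x1, x2, x3, x4; split => //; rewrite /= !inE !negb_or; neqs.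
Qed.

Lemma walk6 c x0 : c \in verts F -> 6 <= #|link_verts F c| -> x0 \in link_verts F c ->
  exists x1 x2 x3 x4 x5, [/\ [set c; x0; x1] \in F, [set c; x2; x3] \in F,
     [set c; x4; x5] \in F & uniq [:: c; x0; x1; x2; x3; x4; x5]].
Proof.
move=> Hc d6 Hx0.
have [x1 [x2 [x3 [x4 [t01 t12 t23 t34 U]]]]] := walk5 Hc (ltnW d6) Hx0.
move: U; rewrite /= !inE !negb_or => /and5P [/and5P [c0 c1 c2 c3 c4] /and4P [o1 o2 o3 o4]
   /and3P [o12 o13 o14] /andP [o23 o24] /andP [o34 _]].
have [x5 x53 t45] := edge_other (tri_sym t34).
have [_ o45 c5] := tri_neq t45.
have x52 : x5 != x2.
  apply/negP => /eqP e; rewrite e in t45.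
  apply: (nb_not (tri_sym t12) t23 o13 _ _ (tri_sym t45)); by rewrite eq_sym.
have x51 : x5 != x1.
  apply/negP => /eqP e; rewrite e in t45.
  apply: (nb_not (tri_sym t01) t12 o2 _ _ (tri_sym t45)); by rewrite eq_sym.
have x50 : x5 != x0.
  apply/negP => /eqP e; rewrite e in t45.
  suff H5 : #|link_verts F c| <= 5 by move: (leq_trans d6 H5).
  apply: (link_closed (s := [:: x0; x1; x2; x3; x4]) Hc (mem_head _ _) Hx0) => x z.
  rewrite in_cons => /predU1P [->|]; last rewrite in_cons => /predU1P [->|];
    last rewrite in_cons => /predU1P [->|]; last rewrite in_cons => /predU1P [->|];
    last rewrite mem_seq1 => /eqP ->; move=> Hz.
  - apply: (in_nb _ _ t01 (tri_sym t45) o14 Hz); by rewrite !inE eqxx ?orbT.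
  - apply: (in_nb _ _ (tri_sym t01) t12 o2 Hz); by rewrite !inE eqxx ?orbT.
  - apply: (in_nb _ _ (tri_sym t12) t23 o13 Hz); by rewrite !inE eqxx ?orbT.
  - apply: (in_nb _ _ (tri_sym t23) t34 o24 Hz); by rewrite !inE eqxx ?orbT.
  - apply: (in_nb _ _ (tri_sym t34) t45 _ Hz); by rewrite ?inE ?eqxx ?orbT // eq_sym.
exists x1, x2, x3, x4, x5; split => //; rewrite /= !inE !negb_or; neqs.
Qed.

Lemma card_sum (U : finType) (A : {set U}) (P : pred U) :
  #|[set x in A | P x]| = \sum_(x in A) (P x : nat).
Proof.
rewrite -sum1_card (eq_bigl (fun x => (x \in A) && P x)); last by move=> x; rewrite inE.
rewrite big_mkcondr /=; apply: eq_bigr => x _; by case: (P x).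
Qed.

Lemma three_f : 3 * #|F| = 2 * #|edges F|.
Proof.
have E1 : \sum_(t in F) #|[set e in edges F | e \subset t]| = #|F| * 3.
  rewrite -sum_nat_const; apply: eq_bigr => t tF.
  have -> : [set e in edges F | e \subset t] = [set e : {set T} | e \subset t & #|e| == 2].
    apply/setP => e; rewrite !inE; apply/andP/andP => [[/andP [c2 _] s]|[s c2]]; first by [].
    by rewrite c2 s; split => //; apply/existsP; exists t; rewrite tF s.
  by rewrite cards_draws Htri.
have E2 : \sum_(e in edges F) #|[set t in F | e \subset t]| = #|edges F| * 2.
  by rewrite -sum_nat_const; apply: eq_bigr => e eE; rewrite Hedge.
rewrite mulnC -E1 mulnC -E2.
under eq_bigr => t _ do rewrite card_sum.
rewrite exchange_big /=; apply: eq_bigr => e _; by rewrite card_sum.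
Qed.

Lemma edge_verts e : e \in edges F -> e \subset verts F.
Proof.
rewrite inE => /andP [_ /existsP [t /andP [tF s]]].
apply: subset_trans s _; exact: (bigcup_sup t tF).
Qed.

Lemma deg_edges c : #|[set e in edges F | c \in e]| <= #|link_verts F c|.
Proof.
apply: leq_trans (leq_imset_card (fun x => [set c; x]) _).
apply: subset_leq_card; apply/subsetP => e; rewrite inE => /andP [eE ce].
have c2 : #|e| = 2 by move: eE; rewrite inE => /andP [/eqP -> _].
have : ~~ (e \subset [set c]).
  by apply/negP => /subset_leq_card; rewrite c2 cards1.
case/subsetPn => x xe; rewrite inE => xc.
have ex : e = [set c; x].
  apply/eqP; rewrite eq_sym eqEcard c2 cards2 eq_sym xc leqnn andbT.
  by apply/subsetP => z; rewrite !inE => /orP [] /eqP ->.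
apply/imsetP; exists x => //; by rewrite inE xc -ex eE.
Qed.

Lemma deg_sum : 2 * #|edges F| <= \sum_(c in verts F) #|link_verts F c|.
Proof.
apply: (@leq_trans (\sum_(c in verts F) #|[set e in edges F | c \in e]|)); last by apply: leq_sum => c _; exact: deg_edges.
under eq_bigr => c _ do rewrite card_sum.
rewrite exchange_big /= mulnC -sum_nat_const leq_eqVlt; apply/orP; left; apply/eqP.
apply: eq_bigr => e eE; rewrite -card_sum.
have -> : [set x in verts F | x \in e] = e.
  apply/setP => x; rewrite inE andbC; case: (boolP (x \in e)) => //= xe.
  exact: (subsetP (edge_verts eE)).
by move: eE; rewrite inE => /andP [/eqP -> _].
Qed.

Lemma tri_verts a b c : [set a; b; c] \in F -> [/\ a \in verts F, b \in verts F & c \in verts F].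
Proof.
move=> H; have S := bigcup_sup _ H (F := id) (P := mem F); move/subsetP: S => S.
by split; apply: S; rewrite !inE eqxx ?orbT.
Qed.

Lemma tri_rot c x y : [set c; x; y] \in F -> [set x; y; c] \in F.
Proof. by rewrite set3_12 set3_23. Qed.

End Sphere.

Lemma green_in (T : finType) (m : T * T * T) ms : m \in ms ->
  [set m.1.1; m.1.2; m.2] \in green_triangles ms.
Proof. by move=> H; apply/imsetP; exists m. Qed.

Ltac neqs := repeat (match goal with |- is_true (_ && _) => apply/andP; split end);
  try done; try (rewrite eq_sym; done).

Lemma exists_deg (T : finType) (F : {set {set T}}) k :
  k * #|verts F| < 2 * #|edges F| -> exists2 c, c \in verts F & k < #|link_verts F c|.
Proof.
move=> H; case: (boolP [exists c in verts F, k < #|link_verts F c|]).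
  by case/existsP => c /andP [cv ck]; exists c.
rewrite negb_exists => /forallP A.
have : \sum_(c in verts F) #|link_verts F c| <= \sum_(c in verts F) k.
  apply: leq_sum => c cv; move: (A c); by rewrite cv /= -leqNgt.
rewrite sum_nat_const => H2; have := leq_trans (deg_sum F) H2; lia.
Qed.

Lemma green3 (T : finType) (a1 b1 c1 a2 b2 c2 a3 b3 c3 : T) :
  [set a1; b1; c1] != [set a2; b2; c2] -> [set a2; b2; c2] != [set a3; b3; c3] ->
  [set a1; b1; c1] != [set a3; b3; c3] ->
  3 <= #|green_triangles [:: (a1, b1, c1); (a2, b2, c2); (a3, b3, c3)]|.
Proof.
move=> n12 n23 n13.
have C3 : #|[set [set a1; b1; c1]; [set a2; b2; c2]; [set a3; b3; c3]]| = 3 by rewrite card3.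
apply: (leq_trans (eq_leq (esym C3))); apply: subset_leq_card; apply/subsetP => u.
case/setUP => [/setUP []|] /set1P ->.
- by apply/imsetP; exists (a1, b1, c1); rewrite // !inE eqxx ?orbT.
- by apply/imsetP; exists (a2, b2, c2); rewrite // !inE eqxx ?orbT.
- by apply/imsetP; exists (a3, b3, c3); rewrite // !inE eqxx ?orbT.
Qed.

Ltac explode H := move: H; rewrite /= ?inE ?negb_or -?andbA;
  repeat (let h := fresh "h" in case/andP => h); intro.

Theorem mainTheorem3 (T : finType) (F : {set {set T}}) :
  is_sphere2 F -> #|F| <= 12 -> has_winning_strategy F.
Proof.
case=> Htri Hedge Hlink Hconn Heul Hf.
have H3 := three_f Htri Hedge.
have Hfv : #|F| + 4 = 2 * #|verts F| by lia.
have [t tF] : exists t, t \in F.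
  case: (set_0Vmem F) => [F0|[x xF]]; last by exists x.
  move: Hfv; rewrite F0 cards0.
  suff -> : verts set0 = set0 :> {set T} by rewrite cards0.
  by rewrite /verts big_pred0 // => x; rewrite inE.
case: (leqP #|verts F| 4) => v4.
  have : 2 < #|t| by rewrite Htri.
  case/card_gt2P => x [y [z [[xt yt zt] [xy yz zx]]]].
  have tE : t = [set x; y; z].
    apply/eqP; rewrite eq_sym eqEcard Htri // card3 // ?leqnn ?andbT; last by rewrite eq_sym.
    by apply/subsetP => u; rewrite !inE => /orP [/orP []|] /eqP ->.
  have tF' : [set x; y; z] \in F by rewrite -tE.
  exists [set z], [:: (x, y, z)]; split.
  - by rewrite sub1set; have [_ _ ->] := tri_verts tF'.
  - by rewrite cards1.
  - rewrite /= tF' !inE eqxx xy andbT /=; neqs.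
  - have : 0 < #|green_triangles [:: (x, y, z)]|.
      by apply/card_gt0P; exists [set x; y; z]; apply: (green_in (m := (x, y, z))); rewrite inE.
    lia.
have Hv8 : #|verts F| <= 8 by lia.
case: (leqP #|verts F| 6) => v6.
  have [c cv d4] : exists2 c, c \in verts F & 3 < #|link_verts F c|.
    by apply: exists_deg; lia.
  have [x0 x0N] : exists x0, x0 \in link_verts F c by apply/card_gt0P; lia.
  have [x1 [x2 [x3 [t01 t12 t23 U]]]] := walk4 Htri Hedge Hlink cv d4 x0N.
  move: U; rewrite /= !inE !negb_or => /and5P [/and4P [c0 c1 c2 c3] /and3P [o1 o2 o3]
    /andP [o12 o13] o23 _].
  exists [set c], [:: (x0, x1, c); (x2, x3, c)]; split.
  - by rewrite sub1set.
  - by rewrite cards1.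
  - rewrite /= (tri_rot t01) (tri_rot t23) !inE eqxx !negb_or /= ?orbT; neqs.
  - have : 2 <= #|green_triangles [:: (x0, x1, c); (x2, x3, c)]|.
      have ne : [set x0; x1; c] != [set x2; x3; c].
        apply/negP => /eqP E; have : x2 \in [set x0; x1; c] by rewrite E !inE eqxx.
        by rewrite !inE (eq_sym x2 x0) (negbTE o2) (eq_sym x2 x1) (negbTE o12) (eq_sym x2 c) (negbTE c2).
      have C2 : #|[set [set x0; x1; c]; [set x2; x3; c]]| = 2 by rewrite cards2 ne.
      apply: (leq_trans (eq_leq (esym C2))); apply: subset_leq_card; apply/subsetP => u.
      case/setUP => /set1P ->.
      + by apply: (green_in (m := (x0, x1, c))); rewrite mem_head.
      + by apply: (green_in (m := (x2, x3, c))); rewrite in_cons mem_head orbT.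
    move=> G; have Hf8 : #|F| <= 8 by clear -Hfv v6; lia.
    clear -G Hf8; lia.
have [c cv d5] : exists2 c, c \in verts F & 4 < #|link_verts F c|.
  by apply: exists_deg; clear -H3 Hfv v6; lia.
have [x0 x0N] : exists x0, x0 \in link_verts F c by apply/card_gt0P; lia.
case: (leqP 6 #|link_verts F c|) => d6.
  have [x1 [x2 [x3 [x4 [x5 [t01 t23 t45 U]]]]]] := walk6 Htri Hedge Hlink cv d6 x0N.
  explode U.
  exists [set c], [:: (x0, x1, c); (x2, x3, c); (x4, x5, c)]; split.
  - by rewrite sub1set.
  - by rewrite cards1.
  - rewrite /= (tri_rot t01) (tri_rot t23) (tri_rot t45) !inE eqxx !negb_or /= ?orbT; neqs.
  - have G : 3 <= #|green_triangles [:: (x0, x1, c); (x2, x3, c); (x4, x5, c)]|.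
      apply: green3; apply/negP => /eqP E.
      + have : x2 \notin [set x0; x1; c] by rewrite !inE !negb_or; neqs.
        by rewrite E !inE eqxx.
      + have : x4 \notin [set x2; x3; c] by rewrite !inE !negb_or; neqs.
        by rewrite E !inE eqxx.
      + have : x4 \notin [set x0; x1; c] by rewrite !inE !negb_or; neqs.
        by rewrite E !inE eqxx.
    clear -G Hf; lia.
have d55 : #|link_verts F c| = 5 by lia.
have cN : c \notin link_verts F c by rewrite inE eqxx.
have NV : c |: link_verts F c \subset verts F.
  apply/subsetP => z /setU1P [->//|]; rewrite inE => /andP [_ E].
  by apply: (subsetP (edge_verts E)); rewrite !inE eqxx ?orbT.
have : ~~ (verts F \subset c |: link_verts F c).
  apply/negP => /subset_leq_card; rewrite cardsU1 cN d55; clear -v6; lia.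
case/subsetPn => w0 w0v w0N.
have [a [b [ab aN bN]]] := cross (P := fun z => z \notin c |: link_verts F c) (Hconn w0 c w0v cv) w0N
  (ltac:(by rewrite negbK setU11)).
move: ab aN bN; rewrite /adj negbK => /andP [ab E] /setU1P aN /setU1P bN.
have ac : a != c by apply/negP => /eqP e; apply: aN; left.
have aN' : a \notin link_verts F c by apply/negP => h; apply: aN; right.
have {bN} bN : b \in link_verts F c.
  case: bN => // e; rewrite e in E ab.
  by case/negP: aN'; rewrite inE ac /= setUC.
have E' : [set b; a] \in edges F by rewrite setUC.
have [y ty] := edge_apex Htri Hedge E' (ltac:(by rewrite eq_sym)).
have [y' yy' ty'] := edge_other Htri Hedge ty.
have notc : forall z, [set b; a; z] \in F -> z != c.
  move=> z tz; apply/negP => /eqP e; rewrite e in tz.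
  case/negP: aN'; apply: (tri_link Htri (y := b)).
  by rewrite set3_23; exact: (tri_rot (tri_rot tz)).
have [x1 [x2 [x3 [x4 [t01 t12 t23 t34 U]]]]] := walk5 Htri Hedge Hlink cv d5 bN.
have x1N := tri_link Htri t12; have x2N := tri_link Htri (tri_sym t12).
have x3N := tri_link Htri t34; have x4N := tri_link Htri (tri_sym t34).
have nN : forall z, z \in link_verts F c -> a != z.
  by move=> z zN; apply/negP => /eqP e; rewrite e zN in aN'.
have ax1 := nN _ x1N; have ax2 := nN _ x2N; have ax3 := nN _ x3N; have ax4 := nN _ x4N.
have ab' := nN _ bN.
explode U.
have move3 : forall z, [set b; a; z] \in F -> z \in [:: x1; x2; x3; x4] -> has_winning_strategy F.
  move=> z tz zin.
  have zR : z \in x3 |: (x4 |: (x1 |: (x2 |: [set c]))).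
    by move: zin; rewrite !inE; case/or4P => ->; rewrite ?orbT.
  exists [set c], [:: (x1, x2, c); (x3, x4, c); (b, a, z)]; split.
  - by rewrite sub1set.
  - by rewrite cards1.
  - rewrite /= (tri_rot t12) (tri_rot t34) tz zR !inE eqxx !negb_or /= ?orbT; neqs.
  - have G : 3 <= #|green_triangles [:: (x1, x2, c); (x3, x4, c); (b, a, z)]|.
      apply: green3; apply/negP => /eqP Ee.
      + have : x3 \notin [set x1; x2; c] by rewrite !inE !negb_or; neqs.
        by rewrite Ee !inE eqxx.
      + have : a \notin [set x3; x4; c] by rewrite !inE !negb_or; neqs.
        by rewrite Ee !inE eqxx ?orbT.
      + have : a \notin [set x1; x2; c] by rewrite !inE !negb_or; neqs.
        by rewrite Ee !inE eqxx ?orbT.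
    clear -G Hf; lia.
case: (boolP (y \in [:: x1; x2; x3; x4])) => Hy; first exact: move3 ty Hy.
case: (boolP (y' \in [:: x1; x2; x3; x4])) => Hy'; first exact: move3 ty' Hy'.
exfalso.
have [ba ay by'] := tri_neq Htri ty; have [_ ay' by''] := tri_neq Htri ty'.
have yc := notc _ ty; have y'c := notc _ ty'.
explode Hy; explode Hy'.
have Uq : uniq [:: c; b; x1; x2; x3; x4; a; y; y'].
  by rewrite /= !inE !negb_or; neqs.
have := uniq_leq_size (s2 := enum (verts F)) Uq.
rewrite -cardE => H; have : 9 <= #|verts F|.
  have [bv av yv] := tri_verts ty; have [_ _ y'v] := tri_verts ty'.
  have [_ x1v x2v] := tri_verts t12; have [_ x3v x4v] := tri_verts t34.
  by apply: H; apply/allP; rewrite /= !mem_enum cv bv av yv y'v x1v x2v x3v x4v.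
clear -Hv8; lia.
Qed.
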